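(* Let $q_{ij}\in\mathbb{C}$ ($1\le i,j\le 4$) be $4$-th roots of unity with $q_{ii}=q_{ij}q_{ji}=1$ such that $\prod_{i=1}^4 q_{ij}$ is independent of $j$, and let $$A_4=\mathbb{C}\langle x_1,\dots,x_4\rangle\big/\Big(\textstyle\sum_{k=1}^4x_k^4,\ x_ix_j-q_{ij}x_jx_i\Big)_{i,j}$$ (so that $\mathrm{proj}(A_4)$ is a non-commutative Fermat quartic K3 surface). Then $\mathrm{Hilb}^1(A_4)$ is either a quartic K3 surface or $24$ distinct points. In particular its Euler number is $24$, independently of the values of the $q_{ij}$.
   Context: A $1$-point module over a graded algebra $A$ generated in degree $1$ is a cyclic graded right $A$-module generated in degree $0$ with Hilbert series $1/(1-t)$; $\mathrm{Hilb}^1(A)$ is the set (scheme) of isomorphism classes of such modules, identified as a subset of sequences of points of $\mathbb{P}^{3}$ via $m_ix_j=\xi_{i,j}m_{i+1}$, $[\xi_{i,1}:\dots:\xi_{i,4}]\in\mathbb{P}^3$. *)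

(* Defs.v *)
From HB Require Import structures.
From mathcomp Require Import all_boot all_order all_algebra.
From mathcomp Require Import mpoly.
Set Implicit Arguments. Unset Strict Implicit. Unset Printing Implicit Defensive.
Import Order.TTheory GRing.Theory Num.Theory.
Local Open Scope ring_scope.

(* A (representative of a) point of P^3 over C: a vector of homogeneous
   coordinates x : 'I_4 -> C.  Two vectors represent the same point iff
   they are proportional by a nonzero scalar. *)
Definition nonzero4 (C : numClosedFieldType) (x : 'I_4 -> C) : Prop :=
  exists j, x j != 0.

Definition proj_eq (C : numClosedFieldType) (x y : 'I_4 -> C) : Prop :=
  exists c : C, c != 0 /\ forall j, y j = c * x j.

(* A 1-point module over A_4 with basis m_0, m_1, ... and
   m_n x_j = xi n j m_{n+1}.  It is an A_4-module iff the generators of the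
   defining ideal annihilate every m_n:
     m_n (x_a x_b - q_ab x_b x_a) = (xi_{n,a} xi_{n+1,b} - q_ab xi_{n,b} xi_{n+1,a}) m_{n+2} = 0,
     m_n (sum_k x_k^4) = (sum_k xi_{n,k} xi_{n+1,k} xi_{n+2,k} xi_{n+3,k}) m_{n+4} = 0;
   it is cyclic generated by m_0 iff every xi n is nonzero (a point of P^3). *)
Definition point_module_seq (C : numClosedFieldType) (q : 'I_4 -> 'I_4 -> C)
    (xi : nat -> 'I_4 -> C) : Prop :=
  [/\ forall n, nonzero4 (xi n),
      forall n a b, xi n a * xi n.+1 b = q a b * (xi n b * xi n.+1 a)
    & forall n, \sum_(k < 4) xi n k * xi n.+1 k * xi n.+2 k * xi n.+3 k = 0].

Definition pm_iso (C : numClosedFieldType) (xi eta : nat -> 'I_4 -> C) : Prop :=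
  forall n, proj_eq (xi n) (eta n).

(* Hilb^1(A_4) is (via the truncation xi |-> xi_0) a smooth quartic surface
   in P^3 (= a quartic K3 surface): xi_0 determines the point module up to
   isomorphism, and the set of first points xi_0 is the zero locus in P^3 of
   a nonzero quartic form F whose gradient does not vanish on it. *)
Definition hilb1_is_quartic_K3 (C : numClosedFieldType) (q : 'I_4 -> 'I_4 -> C) : Prop :=
  exists F : {mpoly C[4]},
    [/\ F != 0, F \is 4.-homog,
        (forall v : 'I_4 -> C, nonzero4 v -> F.@[v] = 0 ->
            exists i, (mderiv i F).@[v] != 0),
        (forall xi eta, point_module_seq q xi -> point_module_seq q eta ->
            proj_eq (xi 0%N) (eta 0%N) -> pm_iso xi eta)
      & (forall v : 'I_4 -> C, nonzero4 v ->
            (F.@[v] = 0 <-> exists xi, point_module_seq q xi /\ xi 0%N = v))].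

Definition hilb1_is_24_points (C : numClosedFieldType) (q : 'I_4 -> 'I_4 -> C) : Prop :=
  exists P : 'I_24 -> nat -> 'I_4 -> C,
    [/\ forall k, point_module_seq q (P k),
        forall k l, pm_iso (P k) (P l) -> k = l
      & forall xi, point_module_seq q xi -> exists k, pm_iso xi (P k)].

(* Main.v *)
Require Import Defs.
From HB Require Import structures.
From mathcomp Require Import all_boot all_order all_algebra.
From mathcomp Require Import mpoly.
From mathcomp Require Import ring.
Import Order.TTheory GRing.Theory Num.Theory.
Local Open Scope ring_scope.

Lemma nz_pow4 (C : numClosedFieldType) (x : C) : x ^+ 4 = 1 -> x != 0.
Proof.
move=> h; apply/eqP => x0; move: h; rewrite x0 expr0n /=.
by move/esym/eqP; rewrite oner_eq0.
Qed.

Arguments nz_pow4 {C x}.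

Lemma pm_next (C : numClosedFieldType) (q : 'I_4 -> 'I_4 -> C) xi n a :
  point_module_seq q xi -> xi n a != 0 -> xi n.+1 a != 0.
Proof.
case=> nz rel _ h; apply/negP => /eqP h1.
case: (nz n.+1) => b hb; have := rel n a b.
rewrite h1 !mulr0 => /eqP; rewrite mulf_eq0 (negbTE h) (negbTE hb).
by [].
Qed.

Arguments pm_next {C q xi n a}.

Lemma pm_next0 (C : numClosedFieldType) (q : 'I_4 -> 'I_4 -> C) xi n a :
  point_module_seq q xi -> xi n a = 0 -> xi n.+1 a = 0.
Proof.
case=> nz rel _ h; case: (nz n) => b hb; have := rel n b a.
rewrite h mul0r mulr0 => /eqP; rewrite mulf_eq0 (negbTE hb) /=.
by move/eqP.
Qed.

Arguments pm_next0 {C q xi n a}.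

Lemma pm_shape (C : numClosedFieldType) (q : 'I_4 -> 'I_4 -> C) xi a :
  (forall i, q i i = 1) ->
  point_module_seq q xi -> xi 0%N a != 0 ->
  forall n, exists2 mu : C, mu != 0 & forall b, xi n b = mu * q a b ^+ n * xi 0%N b.
Proof.
move=> hqii pm h0; elim=> [|n [mu mu0 H]].
  by exists 1; rewrite ?oner_neq0 // => b; rewrite expr0 !mulr1 mul1r.
have xa : xi n a != 0 by rewrite H hqii expr1n !mulf_neq0 ?oner_neq0.
have xa1 := pm_next pm xa.
exists (xi n.+1 a / xi 0%N a); first by rewrite mulf_neq0 ?invr_eq0.
move=> b; case: pm => _ rel _; have r := rel n a b.
rewrite !H hqii expr1n mulr1 in r.
apply: (mulfI (_ : mu * xi 0%N a != 0)); first by rewrite mulf_neq0.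
rewrite r exprS; field.
by [].
Qed.

Arguments pm_shape {C q xi a}.

Lemma pm_det (C : numClosedFieldType) (q : 'I_4 -> 'I_4 -> C) xi eta :
  point_module_seq q xi -> point_module_seq q eta ->
  proj_eq (xi 0%N) (eta 0%N) -> pm_iso xi eta.
Proof.
move=> pmx pme h; elim=> // n [c [c0 H]].
have [a xa] : exists a, xi n a != 0 by case: pmx => nz _ _; exact: nz.
have ea : eta n a != 0 by rewrite H mulf_neq0.
have xa1 := pm_next pmx xa; have ea1 := pm_next pme ea.
exists (eta n.+1 a / xi n.+1 a); split; first by rewrite mulf_neq0 ?invr_eq0.
move=> b; case: pmx => _ rx _; case: pme => _ re _.
have r1 := rx n a b; have r2 := re n a b; rewrite !H in r2.
apply: (mulfI (_ : c * xi n a * xi n.+1 a != 0)); first by rewrite !mulf_neq0.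
have -> : c * xi n a * xi n.+1 a * eta n.+1 b = xi n.+1 a * (c * xi n a * eta n.+1 b) by ring.
rewrite r2.
have -> : c * xi n a * xi n.+1 a * (eta n.+1 a / xi n.+1 a * xi n.+1 b)
   = c * eta n.+1 a * (xi n a * xi n.+1 b) * (xi n.+1 a / xi n.+1 a) by ring.
rewrite r1 divff // mulr1; ring.
Qed.

Arguments pm_det {C q xi eta}.

From mathcomp Require Import zify.

Lemma pm_build (C : numClosedFieldType) (q : 'I_4 -> 'I_4 -> C) (e v : 'I_4 -> C) :
  (forall k, e k ^+ 4 = 1) -> nonzero4 v ->
  (forall b c, v b * v c * (e c - q b c * e b) = 0) ->
  \sum_(k < 4) e k ^+ 2 * v k ^+ 4 = 0 ->
  point_module_seq q (fun n k => e k ^+ n * v k).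
Proof.
move=> he [j vj] hr hs; split.
- by move=> n; exists j; rewrite mulf_neq0 // expf_neq0 // nz_pow4.
- move=> n a b; apply/eqP; rewrite -subr_eq0.
  have -> : e a ^+ n * v a * (e b ^+ n.+1 * v b) - q a b * (e b ^+ n * v b * (e a ^+ n.+1 * v a))
     = e a ^+ n * e b ^+ n * (v a * v b * (e b - q a b * e a)) by rewrite !exprS; ring.
  by rewrite hr mulr0.
- move=> n /=; rewrite -[RHS]hs; apply: eq_bigr => k _.
  have E : e k ^+ n * e k ^+ n.+1 * e k ^+ n.+2 * e k ^+ n.+3 = e k ^+ 2 * (e k ^+ 4) ^+ n.+1.
    by rewrite -!exprD -exprM -exprD; congr (_ ^+ _); lia.
  rewrite he expr1n mulr1 in E; rewrite -E; ring.
Qed.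

Arguments pm_build {C q e v}.

Lemma pm_quart (C : numClosedFieldType) (q : 'I_4 -> 'I_4 -> C) xi a :
  (forall i j, q i j ^+ 4 = 1) -> (forall i, q i i = 1) ->
  point_module_seq q xi -> xi 0%N a != 0 ->
  \sum_(k < 4) q a k ^+ 2 * xi 0%N k ^+ 4 = 0.
Proof.
move=> hq4 hqii pm h0.
have [m1 m10 H1] := pm_shape hqii pm h0 1.
have [m2 m20 H2] := pm_shape hqii pm h0 2.
have [m3 m30 H3] := pm_shape hqii pm h0 3.
case: (pm) => _ _ /(_ 0%N) hs.
have : (m1 * m2 * m3) * \sum_(k < 4) q a k ^+ 2 * xi 0%N k ^+ 4 = 0.
  rewrite -[RHS]hs mulr_sumr; apply: eq_bigr => k _; rewrite H1 H2 H3.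
  have E : q a k ^+ 6 = q a k ^+ 2 by rewrite (exprD _ 4 2) hq4 mul1r.
  rewrite -{1}E; ring.
by move/eqP; rewrite !mulf_eq0 (negbTE m10) (negbTE m20) (negbTE m30) /= => /eqP.
Qed.

Lemma pm_coc (C : numClosedFieldType) (q : 'I_4 -> 'I_4 -> C) xi a b c :
  (forall i j, q i j ^+ 4 = 1) -> (forall i, q i i = 1) ->
  point_module_seq q xi -> xi 0%N a != 0 -> xi 0%N b != 0 -> xi 0%N c != 0 ->
  q a b * q b c = q a c.
Proof.
move=> hq4 hqii pm h0 hb hc.
have [m1 m10 H1] := pm_shape hqii pm h0 1.
case: (pm) => _ /(_ 0%N b c) r _; rewrite !H1 !expr1 in r.
apply: (mulfI (_ : m1 * xi 0%N b * xi 0%N c != 0)); first by rewrite !mulf_neq0.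
have -> : m1 * xi 0%N b * xi 0%N c * q a c = xi 0%N b * (m1 * q a c * xi 0%N c) by ring.
rewrite r; ring.
Qed.

Arguments pm_coc {C q xi a b c}.
Arguments pm_quart {C q xi a}.

Lemma pigeon (a b c i j : 'I_4) : a != b -> a != c -> b != c ->
  i != a -> i != b -> i != c -> j != a -> j != b -> j != c -> i = j.
Proof.
move=> ab ac bc ia ib ic ja jb jc; apply: val_inj.
move: ab ac bc ia ib ic ja jb jc (ltn_ord a) (ltn_ord b) (ltn_ord c) (ltn_ord i) (ltn_ord j).
rewrite -!val_eqE /=; lia.
Qed.

Arguments pigeon {a b c i j}.

Lemma qinv (C : numClosedFieldType) (q : 'I_4 -> 'I_4 -> C) :
  (forall i j, q i j ^+ 4 = 1) -> (forall i j, q i j * q j i = 1) ->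
  forall i j, q j i = (q i j)^-1.
Proof.
move=> hq4 hqij i j.
by rewrite -[RHS]mulr1 -(hqij i j) mulKf // nz_pow4.
Qed.

Arguments qinv {C q}.

Lemma rprod (C : numClosedFieldType) (q : 'I_4 -> 'I_4 -> C) :
  (forall i j, q i j ^+ 4 = 1) -> (forall i j, q i j * q j i = 1) ->
  (forall j j', \prod_(i < 4) q i j = \prod_(i < 4) q i j') ->
  forall s t, \prod_(i < 4) (q i t * q s i * q t s) = 1.
Proof.
move=> hq4 hqij hprod s t.
rewrite big_split /= big_split /= prodr_const card_ord hq4 mulr1.
have -> : \prod_(i < 4) q s i = (\prod_(i < 4) q i s)^-1.
  by rewrite -prodfV; apply: eq_bigr => i _; apply: qinv.
rewrite (hprod t s) mulfV //.
by apply/prodf_neq0 => i _; apply: nz_pow4.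
Qed.

Arguments rprod {C q}.

Lemma no_three (C : numClosedFieldType) (q : 'I_4 -> 'I_4 -> C) xi a b c :
  (forall i j, q i j ^+ 4 = 1) -> (forall i, q i i = 1) -> (forall i j, q i j * q j i = 1) ->
  (forall j j', \prod_(i < 4) q i j = \prod_(i < 4) q i j') ->
  point_module_seq q xi -> xi 0%N a != 0 -> xi 0%N b != 0 -> xi 0%N c != 0 ->
  a != b -> a != c -> b != c ->
  forall x y z, q x y * q y z = q x z.
Proof.
move=> hq4 hqii hqij hprod pm ha hb hc ab ac bc.
set v := xi 0%N.
have qnz : forall i j, q i j != 0 by move=> i j; apply: nz_pow4.
have neq : forall i j, v i = 0 -> v j != 0 -> i != j.
  by move=> i j hi hj; apply/eqP => e; move: hj; rewrite -e hi eqxx.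
have T : forall s t i, v s != 0 -> v t != 0 -> q s i * q i t = q s t.
  move=> s t i hs ht.
  have [hi|hi] := eqVneq (v i) 0; last exact: (pm_coc hq4 hqii pm hs hi ht).
  have others : forall j, j != i -> v j != 0.
    move=> j ji; apply/negP => /eqP hj.
    have := pigeon ab ac bc (neq _ _ hi ha) (neq _ _ hi hb) (neq _ _ hi hc)
       (neq _ _ hj ha) (neq _ _ hj hb) (neq _ _ hj hc).
    by move=> e; move: ji; rewrite e eqxx.
  have R := rprod hq4 hqij hprod s t.
  rewrite (bigD1 i) //= big1 ?mulr1 in R; last first.
    move=> j ji; rewrite (mulrC (q j t)) (pm_coc hq4 hqii pm hs (others j ji) ht).
    exact: hqij.
  apply: (mulIf (qnz t s)); rewrite hqij -R; ring.
have E : forall x y, q a x * q x y = q a y.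
  move=> x y; have [hy|hy] := eqVneq (v y) 0; last exact: T.
  have [hx|hx] := eqVneq (v x) 0.
    have xy := pigeon ab ac bc (neq _ _ hx ha) (neq _ _ hx hb) (neq _ _ hx hc)
       (neq _ _ hy ha) (neq _ _ hy hb) (neq _ _ hy hc).
    by rewrite xy hqii mulr1.
  have h := T x a y hx ha.
  by apply: (mulIf (qnz y a)); rewrite -mulrA h !hqij.
by move=> x y z; apply: (mulfI (qnz a x)); rewrite mulrA !E.
Qed.

From Stdlib Require Import FunctionalExtensionality.

Lemma meval_exp (C : numClosedFieldType) (v : 'I_4 -> C) (p : {mpoly C[4]}) n :
  (p ^+ n).@[v] = p.@[v] ^+ n.
Proof. elim: n => [|n IH]; first by rewrite !expr0 meval1. by rewrite !exprS mevalM IH. Qed.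

Lemma mderiv_exp (C : numClosedFieldType) (v : 'I_4 -> C) (p : {mpoly C[4]}) i n :
  (mderiv i (p ^+ n.+1)).@[v] = n.+1%:R * p.@[v] ^+ n * (mderiv i p).@[v].
Proof.
elim: n => [|n IH]; first by rewrite expr1 expr0 mulr1 mul1r.
rewrite exprS mderivM mevalD !mevalM IH meval_exp -(addn1 n.+1) natrD exprS; ring.
Qed.

Lemma mderivXU (C : numClosedFieldType) (v : 'I_4 -> C) i k :
  (mderiv i ('X_k : {mpoly C[4]})).@[v] = (k == i)%:R.
Proof.
rewrite mderivX mevalZ mnm1E; case: eqVneq => [->|_]; last by rewrite mul0r.
have -> : (U_(i) - U_(i))%MM = 0%MM by apply/mnmP => j; rewrite mnmBE subnn mnm0E.
by rewrite mpolyX0 meval1 mulr1.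
Qed.

Lemma homogX4 (C : numClosedFieldType) (k : 'I_4) : ('X_k : {mpoly C[4]}) ^+ 4 \is 4.-homog.
Proof.
have := dhomogMn 4 (_ : ('X_k : {mpoly C[4]}) \is 1.-homog); apply.
by rewrite dhomogX; apply/eqP; exact: mdeg1.
Qed.

Lemma k3_case (C : numClosedFieldType) (q : 'I_4 -> 'I_4 -> C) :
  (forall i j, q i j ^+ 4 = 1) -> (forall i, q i i = 1) ->
  (forall x y z, q x y * q y z = q x z) -> hilb1_is_quartic_K3 q.
Proof.
move=> hq4 hqii coc.
pose F : {mpoly C[4]} := \sum_(k < 4) (q ord0 k ^+ 2) *: 'X_k ^+ 4.
have evF : forall v, F.@[v] = \sum_(k < 4) q ord0 k ^+ 2 * v k ^+ 4.
  by move=> v; rewrite /F raddf_sum; apply: eq_bigr => k _; rewrite /= mevalZ meval_exp mevalXU.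
have dF : forall v i, (mderiv i F).@[v] = 4%:R * q ord0 i ^+ 2 * v i ^+ 3.
  move=> v i; rewrite /F (big_morph (mderiv i) (@mderivD _ _ i) (@mderiv0 _ _ i)) raddf_sum /=.
  rewrite (bigD1 i) //= big1 ?addr0.
    by rewrite mderivZ mevalZ mderiv_exp mderivXU eqxx mulr1 mevalXU; ring.
  by move=> j ji; rewrite mderivZ mevalZ mderiv_exp mderivXU (negbTE ji) !mulr0.
exists F; split.
- apply/eqP => F0; have := evF (fun j => (j == ord0)%:R).
  rewrite F0 meval0 (bigD1 ord0) //= big1 ?addr0 ?eqxx ?hqii ?expr1n ?mulr1.
    by move/eqP; rewrite eq_sym oner_eq0.
  by move=> j /negbTE ->; rewrite expr0n mulr0.
- by apply: rpred_sum => k _; apply: dhomogZ; apply: homogX4.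
- move=> v [j vj] _; exists j.
  by rewrite dF !mulf_neq0 ?expf_neq0 ?pnatr_eq0 // nz_pow4.
- move=> xi eta pmx pme; exact: (pm_det pmx pme).
- move=> v vnz; split.
  + move=> Fv; exists (fun n k => q ord0 k ^+ n * v k); split.
      apply: pm_build => //.
        by move=> b c; rewrite (mulrC (q b c)) coc subrr mulr0.
      by rewrite -evF.
    by apply: functional_extensionality => k; rewrite expr0 mul1r.
  + case=> xi [pm x0]; case: (vnz) => a va.
    have va' : xi 0%N a != 0 by rewrite x0.
    have Q := pm_quart hq4 hqii pm va'; rewrite x0 in Q.
    rewrite evF; transitivity (q ord0 a ^+ 2 * \sum_(k < 4) q a k ^+ 2 * v k ^+ 4).
      by rewrite mulr_sumr; apply: eq_bigr => k _; rewrite -(coc ord0 a k); ring.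
    by rewrite Q mulr0.
Qed.

Lemma neg1_neq1 (C : numClosedFieldType) : (-1 : C) != 1.
Proof. by rewrite lt_eqF // (lt_trans (ltrN10 C) ltr01). Qed.

Lemma i4 (C : numClosedFieldType) : ('i : C) ^+ 4 = 1.
Proof. by rewrite (exprM _ 2 2) sqrCi sqrrN expr1n. Qed.

Lemma ipow_neq1 (C : numClosedFieldType) d : (0 < d < 4)%N -> ('i : C) ^+ d != 1.
Proof.
case: d => [|[|[|[|d]]]] //= _.
- by apply/eqP => h; move: (sqrCi C); rewrite -[X in X ^+ 2]expr1 h expr1n => /eqP; rewrite eq_sym (negbTE (neg1_neq1 C)).
- by rewrite sqrCi neg1_neq1.
- rewrite exprS sqrCi mulrN1; apply/eqP => h.
  move: (sqrCi C); rewrite -(opprK 'i) h sqrrN expr1n => /eqP.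
  by rewrite eq_sym (negbTE (neg1_neq1 C)).
Qed.

Lemma ipow_inj (C : numClosedFieldType) (m m' : nat) : (m < 4)%N -> (m' < 4)%N ->
  ('i : C) ^+ m = 'i ^+ m' -> m = m'.
Proof.
wlog le : m m' / (m <= m')%N.
  move=> H hm hm' e; case: (leqP m m') => h; first exact: H.
  by apply/esym; apply: H => //; apply: ltnW.
move=> hm hm' e; apply/eqP; rewrite eqn_leq le /=; rewrite leqNgt; apply/negP => lt.
have : ('i : C) ^+ (m' - m) = 1.
  apply: (mulfI (expf_neq0 m (neq0Ci C))); rewrite -exprD subnKC ?mulr1 ?e //.
by apply/eqP; apply: ipow_neq1; lia.
Qed.

Lemma roots4 (C : numClosedFieldType) (t r : C) : r != 0 -> t ^+ 4 = r ^+ 4 ->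
  exists2 m, (m < 4)%N & t = r * 'i ^+ m.
Proof.
move=> r0 h; set z := t / r.
have tz : t = r * z by rewrite /z mulrC divfK.
have z4 : z ^+ 4 = 1 by rewrite /z exprMn h exprVn mulfV // expf_neq0.
have F : (z - 1) * (z + 1) * ((z - 'i) * (z + 'i)) = 0.
  have -> : (z - 'i) * (z + 'i) = z ^+ 2 - 'i ^+ 2 by ring.
  rewrite sqrCi; transitivity (z ^+ 4 - 1); first ring.
  by rewrite z4 subrr.
move/eqP: F; rewrite !mulf_eq0 !subr_eq0 !addr_eq0 => /orP[/orP[]|/orP[]] /eqP e.
- by exists 0%N => //; rewrite tz e expr0.
- by exists 2%N => //; rewrite tz e sqrCi.
- by exists 1%N => //; rewrite tz e expr1.
- by exists 3%N => //; rewrite tz e exprS sqrCi mulrN1.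
Qed.

Definition pa_n (p : nat) : nat := match p with 0|1|2 => 0 | 3|4 => 1 | _ => 2 end.
Definition pb_n (p : nat) : nat := match p with 0 => 1 | 1 => 2 | 2 => 3 | 3 => 2 | _ => 3 end.

Lemma pab_lt p : (p < 6)%N -> (pa_n p < pb_n p < 4)%N.
Proof. by case: p => [|[|[|[|[|[|p]]]]]]. Qed.

Ltac cov := first [ by exists 0%N; [|left] | by exists 0%N; [|right]
  | by exists 1%N; [|left] | by exists 1%N; [|right]
  | by exists 2%N; [|left] | by exists 2%N; [|right]
  | by exists 3%N; [|left] | by exists 3%N; [|right]
  | by exists 4%N; [|left] | by exists 4%N; [|right]
  | by exists 5%N; [|left] | by exists 5%N; [|right] ].

Lemma pair_cover (a b : nat) : (a < 4)%N -> (b < 4)%N -> a != b ->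
  exists2 p, (p < 6)%N & (pa_n p = a /\ pb_n p = b) \/ (pa_n p = b /\ pb_n p = a).
Proof.
by case: a => [|[|[|[|a]]]] // _; case: b => [|[|[|[|b]]]] // _ _; cov.
Qed.

Lemma pair_inj p p' : (p < 6)%N -> (p' < 6)%N -> pa_n p = pa_n p' -> pb_n p = pb_n p' -> p = p'.
Proof.
by case: p => [|[|[|[|[|[|p]]]]]] //; case: p' => [|[|[|[|[|[|p']]]]]].
Qed.

Definition pa (p : nat) : 'I_4 := inord (pa_n p).
Definition pb (p : nat) : 'I_4 := inord (pb_n p).

Lemma val_pa p : (p < 6)%N -> val (pa p) = pa_n p.
Proof. by move=> hp; rewrite /pa /= inordK //; case/andP: (@pab_lt p hp) => h1 h2; lia. Qed.
Lemma val_pb p : (p < 6)%N -> val (pb p) = pb_n p.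
Proof. by move=> hp; rewrite /pb /= inordK //; case/andP: (@pab_lt p hp). Qed.

Lemma pab_neq p : (p < 6)%N -> pa p != pb p.
Proof.
move=> hp; rewrite -val_eqE val_pa // val_pb //; case/andP: (@pab_lt p hp) => h1 _.
by rewrite neq_ltn h1.
Qed.

Arguments pab_neq {p}.
Arguments pab_lt {p}.
Arguments pair_inj {p p'}.
Arguments pair_cover {a b}.
Arguments ipow_inj {C m m'}.
Arguments roots4 {C t r}.

Definition rr (C : numClosedFieldType) (q : 'I_4 -> 'I_4 -> C) p : C :=
  sqrtC (sqrtC (- q (pa p) (pb p) ^+ 2)).

Arguments rr {C} q p.

Lemma rr4 (C : numClosedFieldType) (q : 'I_4 -> 'I_4 -> C) p :
  rr q p ^+ 4 = - q (pa p) (pb p) ^+ 2.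
Proof. by rewrite /rr (exprM _ 2 2) !sqrtCK. Qed.

Arguments rr4 {C} q p.

Lemma rr_neq0 (C : numClosedFieldType) (q : 'I_4 -> 'I_4 -> C) p :
  (forall i j, q i j ^+ 4 = 1) -> rr q p != 0.
Proof.
move=> hq4; apply/eqP => r0; have := rr4 q p; rewrite r0 expr0n /= => /eqP.
by rewrite eq_sym oppr_eq0 expf_eq0 /= (negbTE (nz_pow4 (hq4 _ _))).
Qed.

Definition Ptm (C : numClosedFieldType) (q : 'I_4 -> 'I_4 -> C) (p m : nat) (j : 'I_4) : C :=
  if j == pa p then rr q p * 'i ^+ m else if j == pb p then 1 else 0.

Arguments Ptm {C} q p m j.
Arguments rr_neq0 {C} q p.

Lemma Ptm_nz (C : numClosedFieldType) (q : 'I_4 -> 'I_4 -> C) p m j :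
  (forall i j, q i j ^+ 4 = 1) ->
  (Ptm q p m j != 0) = ((j == pa p) || (j == pb p)).
Proof.
move=> hq4; rewrite /Ptm; case: (eqVneq j (pa p)) => [_|_] /=.
  by rewrite mulf_neq0 ?expf_neq0 ?neq0Ci ?rr_neq0.
by case: (eqVneq j (pb p)) => _; [rewrite oner_neq0 | rewrite eqxx].
Qed.

Lemma Ptm_pm (C : numClosedFieldType) (q : 'I_4 -> 'I_4 -> C) p m :
  (forall i j, q i j ^+ 4 = 1) -> (forall i, q i i = 1) -> (forall i j, q i j * q j i = 1) ->
  (p < 6)%N ->
  point_module_seq q (fun n j => q (pa p) j ^+ n * Ptm q p m j).
Proof.
move=> hq4 hqii hqij hp; have AB := pab_neq hp.
have BA : pb p != pa p by rewrite eq_sym.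
apply: pm_build => //.
- by exists (pb p); rewrite /Ptm (negbTE BA) eqxx oner_neq0.
- have key : forall j, Ptm q p m j = 0 \/ j = pa p \/ j = pb p.
    move=> j; rewrite /Ptm; case: (eqVneq j (pa p)) => [->|_]; first by right; left.
    by case: (eqVneq j (pb p)) => [->|_]; [right; right | left].
  move=> b c; case: (key b) => [->|[->|->]]; case: (key c) => [->|[->|->]];
    by rewrite ?mulr0 ?mul0r ?hqii ?hqij ?mulr1 ?mul1r ?subrr ?mulr0.
- rewrite (bigD1 (pa p)) //= (bigD1 (pb p)) //= big1 ?addr0; last first.
    by move=> j /andP [ja jb]; rewrite /Ptm (negbTE ja) (negbTE jb) expr0n /= mulr0.
  rewrite /Ptm eqxx (negbTE BA) eqxx hqii expr1n mul1r expr1n mulr1 exprMn rr4.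
  by rewrite -exprM mulnC exprM i4 expr1n mulr1 addNr.
Qed.

Arguments Ptm_nz {C} q p m j.
Arguments Ptm_pm {C q p} m.
Arguments no_three {C q xi a b c}.

Lemma pts24 (C : numClosedFieldType) (q : 'I_4 -> 'I_4 -> C) :
  (forall i j, q i j ^+ 4 = 1) -> (forall i, q i i = 1) -> (forall i j, q i j * q j i = 1) ->
  (forall j j', \prod_(i < 4) q i j = \prod_(i < 4) q i j') ->
  ~ (forall x y z, q x y * q y z = q x z) ->
  hilb1_is_24_points q.
Proof.
move=> hq4 hqii hqij hprod ncoc.
have hp : forall k : 'I_24, (k %/ 4 < 6)%N by move=> k; have := ltn_ord k; lia.
have hm : forall k : 'I_24, (k %% 4 < 4)%N by move=> k; rewrite ltn_mod.
exists (fun k n j => q (pa (k %/ 4)) j ^+ n * Ptm q (k %/ 4) (k %% 4) j); split.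
- by move=> k; apply: Ptm_pm.
- move=> k l /(_ 0%N) [c [c0 H]].
  have H' : forall j, Ptm q (l %/ 4) (l %% 4) j = c * Ptm q (k %/ 4) (k %% 4) j.
    by move=> j; have := H j; rewrite !expr0 !mul1r.
  have inS : forall j, (j == pa (l %/ 4)) || (j == pb (l %/ 4)) ->
                       (j == pa (k %/ 4)) || (j == pb (k %/ 4)).
    move=> j hj; rewrite -(Ptm_nz q (k %/ 4) (k %% 4) j hq4).
    move: hj; rewrite -(Ptm_nz q (l %/ 4) (l %% 4) j hq4) H' mulf_eq0 negb_or.
    by case/andP.
  have h1 := inS (pa (l %/ 4)) ltac:(by rewrite eqxx).
  have h2 := inS (pb (l %/ 4)) ltac:(by rewrite eqxx orbT).
  rewrite -!val_eqE !val_pa ?val_pb // in h1 h2.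
  have r1 := pab_lt (hp k); have r2 := pab_lt (hp l).
  have e1 : pa_n (k %/ 4) = pa_n (l %/ 4) by lia.
  have e2 : pb_n (k %/ 4) = pb_n (l %/ 4) by lia.
  have pp := pair_inj (hp k) (hp l) e1 e2.
  rewrite -pp in H'.
  have BA : pb (k %/ 4) != pa (k %/ 4) by rewrite eq_sym pab_neq.
  have := H' (pb (k %/ 4)); rewrite /Ptm (negbTE BA) eqxx mulr1 => c1.
  have := H' (pa (k %/ 4)); rewrite /Ptm eqxx -c1 mul1r => /(mulfI (rr_neq0 q _ hq4)).
  move=> /(ipow_inj (hm l) (hm k)) mm.
  by apply: val_inj => /=; rewrite (divn_eq k 4) (divn_eq l 4) pp mm.
- move=> xi pm.
  have [a va] : exists a, xi 0%N a != 0 by case: pm => nz _ _; exact: nz.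
  have Q := pm_quart hq4 hqii pm va.
  have [b /andP [ba vb]] : exists b, (b != a) && (xi 0%N b != 0).
    case: (pickP (fun b => (b != a) && (xi 0%N b != 0))) => [b hb|none]; first by exists b.
    exfalso; move: Q; rewrite (bigD1 a) //= big1 ?addr0.
      by rewrite hqii expr1n mul1r; apply/eqP; rewrite expf_neq0.
    move=> j ja; have := none j; rewrite /= ja /= => /negbFE/eqP ->.
    by rewrite expr0n /= mulr0.
  have z : forall j, j != a -> j != b -> xi 0%N j = 0.
    move=> j ja jb; apply/eqP; apply/negPn/negP => vj; apply: ncoc.
    by apply: (no_three hq4 hqii hqij hprod pm va vb vj); rewrite // eq_sym.
  have ba' : val a != val b by rewrite val_eqE eq_sym.
  have [p hp6 hor] := pair_cover (ltn_ord a) (ltn_ord b) ba'.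
  have [vA [vB zAB]] : xi 0%N (pa p) != 0 /\ xi 0%N (pb p) != 0 /\
      (forall j, j != pa p -> j != pb p -> xi 0%N j = 0).
    case: hor => [[e1 e2]|[e1 e2]].
      have -> : pa p = a by apply: val_inj; rewrite val_pa.
      have -> : pb p = b by apply: val_inj; rewrite val_pb.
      by do !split => //; move=> j h1 h2; exact: z.
    have -> : pa p = b by apply: val_inj; rewrite val_pa.
    have -> : pb p = a by apply: val_inj; rewrite val_pb.
    by do !split => //; move=> j h1 h2; exact: z.
  have AB := pab_neq hp6; have BA : pb p != pa p by rewrite eq_sym.
  have QA := pm_quart hq4 hqii pm vA.
  rewrite (bigD1 (pa p)) //= (bigD1 (pb p)) //= big1 ?addr0 in QA; last first.
    by move=> j /andP [ja jb]; rewrite zAB // expr0n /= mulr0.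
  rewrite hqii expr1n mul1r in QA.
  set t := xi 0%N (pa p) / xi 0%N (pb p).
  have t4 : t ^+ 4 = rr q p ^+ 4.
    rewrite rr4 /t exprMn exprVn; apply: (mulIf (expf_neq0 4 vB)).
    rewrite divfK ?expf_neq0 //.
    by apply/eqP; rewrite -subr_eq0 mulNr opprK QA.
  have [m hm4 tm] := roots4 (rr_neq0 q p hq4) t4.
  have hk : (p * 4 + m < 24)%N by lia.
  exists (Ordinal hk).
  have ed : ((p * 4 + m) %/ 4 = p)%N by rewrite divnMDl // divn_small // addn0.
  have em : ((p * 4 + m) %% 4 = m)%N by rewrite modnMDl modn_small.
  rewrite /= ed em.
  apply: (pm_det pm (Ptm_pm m hq4 hqii hqij hp6) _) => /=.
  exists (xi 0%N (pb p))^-1; split; first by rewrite invr_eq0.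
  move=> j; rewrite expr0 mul1r /Ptm.
  case: (eqVneq j (pa p)) => [->|ja]; first by rewrite -tm /t mulrC.
  case: (eqVneq j (pb p)) => [->|jb]; first by rewrite mulVf.
  by rewrite (zAB j) // mulr0.
Qed.

Theorem proposition3p4 (C : numClosedFieldType) (q : 'I_4 -> 'I_4 -> C)
  (hq4 : forall i j, q i j ^+ 4 = 1)
  (hqii : forall i, q i i = 1)
  (hqij : forall i j, q i j * q j i = 1)
  (hprod : forall j j', \prod_(i < 4) q i j = \prod_(i < 4) q i j') :
  hilb1_is_quartic_K3 q \/ hilb1_is_24_points q.
Proof.
case: (boolP [forall x : 'I_4, [forall y : 'I_4, [forall z : 'I_4, q x y * q y z == q x z]]]) => h.
- left; apply: k3_case => // x y z; apply/eqP.
  exact: (forallP (forallP (forallP h x) y) z).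
- right; apply: pts24 => // coc; move/negP: h; apply.
  apply/forallP => x; apply/forallP => y; apply/forallP => z; apply/eqP; exact: coc.
Qed.
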